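(* The $(1,2)$ Las Vegas elitist black-box complexity of $\textsc{OneMax}$ is at most $2n+1$, and the corresponding algorithm needs at most $n+1$ generations. For every $\lambda\ge 2$ there are $(1,\lambda)$ Las Vegas and Monte Carlo elitist black-box algorithms that need at most $\lceil n/\lfloor\log_2\lambda\rfloor\rceil$ generations on $\textsc{OneMax}$.
   Context: For $z\in\{0,1\}^n$, $\textsc{Om}_z(x)=n-\sum_{i=1}^n (x_i\oplus z_i)$; $\textsc{OneMax}=\{\textsc{Om}_z : z\in\{0,1\}^n\}$. A $(\mu,\lambda)$ elitist black-box algorithm maintains a multiset $X$ of $\mu$ search points (initially sampled one by one, each from a distribution depending only on previous points and the ranking of their fitness values); in each generation it samples $\lambda$ offspring from a distribution depending only on $X$ and the ranking of the fitness values in $X$ (not the values), learns the ranking of the offspring's fitness values, and the new $X$ must consist of $\mu$ offspring of highest fitness among the $\lambda$ offspring (ties broken arbitrarily; the parents are discarded). Runtime: number of sampled search points until an optimum is sampled for the first time; number of generations counted analogously. Las Vegas complexity: min over algorithms of max over functions of expected runtime. *)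

(* Defs.v *)
From HB Require Import structures.
From mathcomp Require Import all_boot all_order all_algebra.
From mathcomp Require Import all_classical all_reals ereal sequences.
Set Implicit Arguments. Unset Strict Implicit. Unset Printing Implicit Defensive.
Import Order.TTheory GRing.Theory Num.Theory.
Local Open Scope ring_scope.

Definition bitv (n : nat) := {ffun 'I_n -> bool}.
Definition pt0 (n : nat) : bitv n := [ffun => false].

Definition OM (n : nat) (z : bitv n) (x : bitv n) : nat :=
  (n - \sum_(i < n) (x i (+) z i))%N.

Definition is_opt (n : nat) (f : bitv n -> nat) (x : bitv n) : bool :=
  [forall y, (f y <= f x)%N].

Definition rankT (n k : nat) (f : bitv n -> nat) (X : k.-tuple (bitv n))
  : 'I_k -> 'I_k -> bool := fun i j => (f (tnth X i) <= f (tnth X j))%N.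

(* ranking information of a sequence of points (indices outside the sequence
   give no information) *)
Definition rankS (n : nat) (f : bitv n -> nat) (s : seq (bitv n))
  : nat -> nat -> bool :=
  fun i j => [&& (i < size s)%N, (j < size s)%N &
                 (f (nth (pt0 n) s i) <= f (nth (pt0 n) s j))%N].

(* A (mu,lam) elitist (comma) black-box algorithm.
   - ea_init s r : distribution of the next initial bitv, given the previous
     initial points s and their ranking r;
   - ea_gen X r : joint distribution of the lam offspring, given the current
     population X and its ranking r;
   - ea_sel X rX Y rY : which offspring form the next population (the tie
     breaking rule, which must select mu offspring of highest fitness). *)
Record EBBA (R : realType) (n mu lam : nat) := MkEBBA {
  ea_init : seq (bitv n) -> (nat -> nat -> bool) -> {ffun bitv n -> R};
  ea_gen : mu.-tuple (bitv n) -> ('I_mu -> 'I_mu -> bool) ->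
           {ffun lam.-tuple (bitv n) -> R};
  ea_sel : mu.-tuple (bitv n) -> ('I_mu -> 'I_mu -> bool) ->
           lam.-tuple (bitv n) -> ('I_lam -> 'I_lam -> bool) -> 'I_mu -> 'I_lam
}.

Definition is_dist (R : realType) (T : finType) (d : {ffun T -> R}) : Prop :=
  (forall x, 0 <= d x) /\ \sum_(x : T) d x = 1.

Definition valid (R : realType) (n mu lam : nat) (A : EBBA R n mu lam) : Prop :=
  [/\ (forall s r, is_dist (ea_init A s r)),
      (forall X r, is_dist (ea_gen A X r)) &
      (forall (f : bitv n -> nat) X Y,
         let s := ea_sel A X (rankT f X) Y (rankT f Y) in
         injective s /\
         forall i j, j \notin codom s -> (f (tnth Y j) <= f (tnth Y (s i)))%N)].

Section Semantics.
Variables (R : realType) (n mu lam : nat) (A : EBBA R n mu lam)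
          (f : bitv n -> nat).

Definition no_opt (s : seq (bitv n)) : bool := all (fun x => ~~ is_opt f x) s.

Definition init_prob (X : mu.-tuple (bitv n)) : R :=
  \prod_(k < mu) ea_init A (take k X) (rankS f (take k X)) (tnth X k).

Definition next_pop (X : mu.-tuple (bitv n)) (Y : lam.-tuple (bitv n))
  : mu.-tuple (bitv n) :=
  [tuple tnth Y (ea_sel A X (rankT f X) Y (rankT f Y) i) | i < mu].

(* surv t X = P(population after t generations is X and no optimum has been
   sampled so far) *)
Fixpoint surv (t : nat) : {ffun mu.-tuple (bitv n) -> R} :=
  match t with
  | 0 => [ffun X => init_prob X * (no_opt X)%:R]
  | t'.+1 => [ffun X' => \sum_(X : mu.-tuple (bitv n)) surv t' X *
        \sum_(Y : lam.-tuple (bitv n)) ea_gen A X (rankT f X) Y *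
             (no_opt Y)%:R * (X' == next_pop X Y)%:R]
  end.

(* P(number of generations until the optimum is first sampled > t);
   generations are counted after the initialization *)
Definition gens_gt (t : nat) : R := \sum_(X : mu.-tuple (bitv n)) surv t X.

(* P(number of sampled search points until the optimum is first sampled > m) *)
Definition evals_gt (m : nat) : R :=
  if (m < mu)%N then
    \sum_(X : mu.-tuple (bitv n)) init_prob X * (no_opt (take m X))%:R
  else
    let t := ((m - mu) %/ lam)%N in
    let j := ((m - mu) %% lam)%N in
    \sum_(X : mu.-tuple (bitv n)) surv t X *
       \sum_(Y : lam.-tuple (bitv n)) ea_gen A X (rankT f X) Y *
             (no_opt (take j Y))%:R.

(* expected runtime E[T] = sum_{m >= 0} P(T > m) *)
Definition exp_evals : \bar R := (\sum_(0 <= m <oo) (evals_gt m)%:E)%E.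

End Semantics.

Definition ceil_div (a b : nat) : nat := (a %/ b + (a %% b != 0))%N.

(* Main.v *)
Require Import Defs.
From HB Require Import structures.
From mathcomp Require Import all_boot all_order all_algebra.
From mathcomp Require Import all_classical all_reals ereal sequences.
From mathcomp Require Import zify.
Import Order.TTheory GRing.Theory Num.Theory.
Local Open Scope ring_scope.

Lemma sum_delta {R : realType} {T : finType} (a : T) (F : T -> R) :
  \sum_x (x == a)%:R * F x = F a.
Proof.
rewrite (bigD1 a) //= eqxx mul1r big1 ?addr0 // => x /negbTE ->; by rewrite mul0r.
Qed.

Lemma tuple1E {T : Type} (X : 1.-tuple T) : exists a, X = [tuple a].
Proof.
case: X => [[|a [|b s]] //= H]; exists a; exact: val_inj.
Qed.

Lemma tuple1_eq {T : eqType} (a b : T) : ([tuple a] == [tuple b]) = (a == b).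
Proof. by rewrite -val_eqE /= eqseq_cons andbT. Qed.

Definition delta (R : realType) (T : finType) (a : T) : {ffun T -> R} :=
  [ffun y => (y == a)%:R].
Arguments delta R {T} a.

Lemma delta_dist (R : realType) (T : finType) (a : T) : is_dist (delta R a).
Proof.
split=> [x|]; first by rewrite ffunE ler0n.
under eq_bigr do rewrite ffunE -[_%:R]mulr1.
by rewrite sum_delta.
Qed.

Section Det.
Variables (R : realType) (n l : nat) (x0 : bitv n)
          (G : bitv n -> (l.+1).-tuple (bitv n)).

Definition selD (X : 1.-tuple (bitv n)) (rX : 'I_1 -> 'I_1 -> bool)
  (Y : (l.+1).-tuple (bitv n)) (rY : 'I_l.+1 -> 'I_l.+1 -> bool) (i : 'I_1)
  : 'I_l.+1 := odflt ord0 [pick j | [forall k, rY k j]].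

Definition AD : EBBA R n 1 l.+1 :=
  MkEBBA (fun _ _ => delta R x0) (fun X _ => delta R (G (tnth X ord0))) selD.

Lemma selD_max (f : bitv n -> nat) X Y k i :
  (f (tnth Y k) <= f (tnth Y (selD X (rankT f X) Y (rankT f Y) i)))%N.
Proof.
rewrite /selD; case: pickP => [j /forallP H | H] /=; first exact: H.
case: (@arg_maxnP _ ord0 xpredT (fun j => f (tnth Y j))) => // j _ Hj.
have : [forall k, rankT f Y k j] by apply/forallP => k'; exact: Hj.
by rewrite H.
Qed.

Lemma AD_valid : valid AD.
Proof.
split=> [s r|X r|f X Y]; try exact: delta_dist.
split; first by move=> i j _; rewrite !ord1.
by move=> i j _; exact: selD_max.
Qed.

Variable f : bitv n -> nat.

Fixpoint st (t : nat) : bitv n :=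
  match t with
  | 0 => x0
  | t'.+1 => tnth (next_pop AD f [tuple st t'] (G (st t'))) ord0
  end.

Fixpoint alive (t : nat) : bool :=
  match t with
  | 0 => no_opt f [:: x0]
  | t'.+1 => alive t' && no_opt f (G (st t'))
  end.

Lemma init_probE X : init_prob AD f X = (X == [tuple x0])%:R.
Proof.
have [a ->] := tuple1E X.
by rewrite /init_prob big_ord1 /= ffunE tuple1_eq.
Qed.

Lemma next_popE t : next_pop AD f [tuple st t] (G (st t)) = [tuple st t.+1].
Proof.
have [a Ha] := tuple1E (next_pop AD f [tuple st t] (G (st t))).
by rewrite /= Ha.
Qed.

Lemma survE t X : surv AD f t X = (X == [tuple st t])%:R * (alive t)%:R.
Proof.
elim: t X => [|t IH] X.
  rewrite /= ffunE init_probE; have [a ->] := tuple1E X.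
  by rewrite tuple1_eq; case: eqP => [->|]; rewrite ?mul0r.
rewrite /= ffunE.
under eq_bigr do rewrite IH -mulrA.
rewrite sum_delta.
under eq_bigr do rewrite /= ffunE -!mulrA.
rewrite sum_delta next_popE.
rewrite /=; case: (alive t); case: (no_opt _ _);
  by rewrite ?mul0r ?mulr0 ?mul1r ?mulr1.
Qed.

Lemma gens_gtE t : gens_gt AD f t = (alive t)%:R.
Proof.
rewrite /gens_gt; under eq_bigr do rewrite survE.
by rewrite sum_delta.
Qed.

Lemma alive_mono t u : (t <= u)%N -> alive u -> alive t.
Proof.
elim: u => [|u IH]; first by rewrite leqn0 => /eqP ->.
rewrite leq_eqVlt => /orP [/eqP -> //|Ht] /= /andP [H _].
exact: IH.
Qed.

Lemma evals_gt_le m : exists b : bool, evals_gt AD f m = b%:R /\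
   (b -> (m == 0)%N || alive ((m - 1) %/ l.+1)).
Proof.
rewrite /evals_gt; case: ifP => Hm.
  exists true; split => //.
  have -> : m = 0%N by case: m Hm.
  rewrite (bigD1 [tuple x0]) //= init_probE tuple1_eq eqxx mul1r big1 ?addr0 // => x Hx.
  by rewrite init_probE (negbTE Hx) mul0r.
  by case: m Hm.
pose t := ((m - 1) %/ l.+1)%N.
pose b := alive t.
exists (b && no_opt f (take ((m - 1) %% l.+1)%N (G (st t)))).
split; last by move/andP=> [Hb _]; rewrite /b /t in Hb; rewrite Hb orbT.
under eq_bigr do rewrite survE -mulrA.
rewrite sum_delta /=.
under eq_bigr do rewrite ffunE.
rewrite sum_delta.
rewrite /b /t /=; case: (alive _); case: (no_opt _ _); by rewrite ?mul0r ?mulr0 ?mul1r ?mulr1.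
Qed.
End Det.

Local Close Scope ring_scope.


Section Alg.
Variables (n k : nat).

Lemma sum_bool_le (b : 'I_n -> bool) : (\sum_(j < n) b j <= n)%N.
Proof.
apply: (@leq_trans (\sum_(j < n) 1)%N); first by apply: leq_sum => j _; exact: leq_b1.
by rewrite sum_nat_const card_ord muln1.
Qed.

Lemma OM_opt (z : bitv n) : is_opt (OM z) z.
Proof.
apply/forallP => y; rewrite /OM.
have -> : (\sum_i (z i (+) z i) = 0)%N by rewrite big1 // => i _; rewrite addbb.
by rewrite subn0 leq_subr.
Qed.

Lemma dist_eq (w y z : bitv n) : (forall j, y j != z j -> w j = y j) ->
  (OM z y <= OM z w)%N -> w = y.
Proof.
move=> H Hle.
have Hs : (\sum_j (w j (+) z j) = \sum_j (y j (+) z j) + \sum_j (w j (+) y j))%N.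
  rewrite -big_split; apply: eq_bigr => j _ /=.
  by move: (H j); case: (w j); case: (y j); case: (z j) => //= /(_ isT).
have Hn := sum_bool_le (fun j => w j (+) z j).
simpl in Hn; move: Hle Hn; rewrite /OM Hs => Hle Hn.
have E : (\sum_(i < n) (y i (+) z i) = \sum_j (y j (+) z j))%N by [].
rewrite E in Hle.
have H0 : (\sum_j (w j (+) y j) = 0)%N by lia.
apply/ffunP => j; move/eqP: H0; rewrite sum_nat_eq0 => /forallP /(_ j).
by case: (w j); case: (y j).
Qed.

End Alg.

Section Alg2.
Variables (n k : nat).

Definition pat (c : nat) : {ffun 'I_k -> bool} :=
  nth [ffun => false] (enum {ffun 'I_k -> bool}) c.
Definition pb (P : {ffun 'I_k -> bool}) (m : nat) : bool :=
  if (insub m : option 'I_k) is Some o then P o else false.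
Definition bz (z : bitv n) (m : nat) : bool :=
  if (insub m : option 'I_n) is Some o then z o else false.
Definition dec (x : bitv n) : nat := (\max_(j < n | x j) j)%N.
Definition off (x : bitv n) (c : nat) : bitv n :=
  [ffun j : 'I_n => if (j < dec x)%N then x j
     else if (j < dec x + k)%N then pb (pat c) (j - dec x)
     else (j == dec x + k :> nat)].
Definition Gk (l : nat) (x : bitv n) : (l.+1).-tuple (bitv n) :=
  [tuple off x c | c < l.+1].
Definition xs0 : bitv n := [ffun j : 'I_n => (j == 0 :> nat)].
Definition Sst (z : bitv n) (t : nat) : bitv n :=
  [ffun j : 'I_n => if (j < t * k)%N then z j else (j == t * k :> nat)].
Definition Ystar (z : bitv n) (t : nat) : bitv n :=
  [ffun j : 'I_n => if (j < t * k + k)%N then z j else (j == t * k + k :> nat)].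

Lemma decS z t : (t * k < n)%N -> dec (Sst z t) = (t * k)%N.
Proof.
move=> Ht; apply/eqP; rewrite eqn_leq; apply/andP; split.
  apply/bigmax_leqP => j; rewrite ffunE; case: ifP => [/ltnW //|_ /eqP -> //].
by apply: (@leq_bigmax_cond _ _ _ (Ordinal Ht)); rewrite ffunE /= ltnn eqxx.
Qed.

Lemma off_tail z t c (j : 'I_n) : (t * k < n)%N -> (t * k + k <= j)%N ->
  off (Sst z t) c j = (j == t * k + k :> nat).
Proof.
move=> Ht Hj; rewrite ffunE decS //.
have -> : (j < t * k)%N = false. apply/negbTE; rewrite -leqNgt. lia.
by have -> : (j < t * k + k)%N = false by apply/negbTE; rewrite -leqNgt.
Qed.

Lemma off_target z t : (t * k < n)%N ->
  exists c, (c < 2 ^ k)%N /\ off (Sst z t) c = Ystar z t.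
Proof.
move=> Ht.
pose P : {ffun 'I_k -> bool} := [ffun o : 'I_k => bz z (t * k + o)].
exists (index P (enum {ffun 'I_k -> bool})); split.
  have : (index P (enum {ffun 'I_k -> bool}) < size (enum {ffun 'I_k -> bool}))%N.
    by rewrite index_mem mem_enum.
  by rewrite -cardE card_ffun card_bool card_ord.
apply/ffunP => j; rewrite !ffunE decS //.
case: ifP => Hj1.
  rewrite Hj1; by have -> : (j < t * k + k)%N by lia.
case: ifP => Hj2 //.
rewrite /pat.
rewrite nth_index; last by rewrite mem_enum.
rewrite /pb.
have Hjk : (j - t * k < k)%N by lia.
rewrite insubT ffunE /bz.
have -> : (t * k + (j - t * k) = j)%N by lia.
by rewrite valK.
Qed.

End Alg2.

Section Main.
Variables (R : realType) (n l : nat) (z : bitv n).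
Hypothesis Hl : (0 < l)%N.
Let k := trunc_log 2 l.+1.
Let G := Gk n k l.
Let f := OM z.

Lemma k_gt0 : (0 < k)%N.
Proof. by rewrite /k trunc_log_gt0. Qed.

Lemma k_le : (2 ^ k <= l.+1)%N.
Proof. exact: trunc_logP. Qed.

Lemma st_S t : (t * k < n)%N -> st R n l (xs0 n) G f t = Sst n k z t.
Proof.
elim: t => [|t IH] Ht.
  by apply/ffunP => j; rewrite /= !ffunE.
have Ht' : (t * k < n)%N by move: Ht; rewrite mulSn; lia.
rewrite /= IH // /next_pop tnth_mktuple.
set s := ea_sel _ _ _ _ _.
have [c [Hc Hoff]] := off_target n k z t Ht'.
have Hcl : (c < l.+1)%N by apply: leq_trans Hc k_le.
have Hmax : (f (tnth (G (Sst n k z t)) (Ordinal Hcl)) <= f (tnth (G (Sst n k z t)) (s ord0)))%N.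
  exact: selD_max.
rewrite /G !tnth_mktuple /= Hoff in Hmax.
rewrite /G tnth_mktuple.
have -> : Sst n k z t.+1 = Ystar n k z t.
  by apply/ffunP => j; rewrite !ffunE mulSn addnC.
apply: dist_eq Hmax => j.
rewrite ffunE; case: ifP => Hj; first by rewrite eqxx.
move=> _; rewrite off_tail //; last by rewrite leqNgt Hj.
Qed.

Lemma alive_false T : (n <= T * k)%N -> alive R n l (xs0 n) G f T = false.
Proof.
case: (posnP n) => [n0|npos].
  have Hd : alive R n l (xs0 n) G f 0 = false.
    rewrite /= andbT; apply/negbTE; rewrite negbK.
    have -> : xs0 n = z by apply/ffunP => j; move: (ltn_ord j); rewrite {2}n0.
    exact: OM_opt.
  move=> _; apply/negbTE/negP => H.
  by move: (alive_mono R n l (xs0 n) G f 0 T (leq0n T) H); rewrite Hd.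
elim: T => [|T IH]; first by rewrite mul0n leqNgt npos.
move=> HT /=.
case: (ltnP (T * k) n) => HTk; last by rewrite IH.
apply/negbTE; rewrite negb_and; apply/orP; right.
have [c [Hc Hoff]] := off_target n k z T HTk.
have Hcl : (c < l.+1)%N by apply: leq_trans Hc k_le.
rewrite st_S // /no_opt; apply/allPn; exists (Ystar n k z T).
  by rewrite -Hoff; have := mem_tnth (Ordinal Hcl) (G (Sst n k z T)); rewrite /G tnth_mktuple.
have -> : Ystar n k z T = z.
  apply/ffunP => j; rewrite ffunE ifT //.
  by move: HT (ltn_ord j); rewrite mulSn addnC; lia.
by rewrite negbK OM_opt.
Qed.

End Main.

Local Open Scope ring_scope.

Lemma ceil_div_ge n k : (0 < k)%N -> (n <= ceil_div n k * k)%N.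
Proof.
move=> kpos; rewrite /ceil_div {1}(divn_eq n k) mulnDl.
have := ltn_pmod n kpos.
case: eqP => [->|_] /= => H; lia.
Qed.

Theorem theorem7 :
  (forall (R : realType) (n : nat),
     exists A : EBBA R n 1 2, valid A /\
       forall z : bitv n,
         (exp_evals A (OM z) <= ((2 * n + 1)%N%:R)%:E)%E /\
         gens_gt A (OM z) n.+1 = 0)
  /\
  (forall (R : realType) (n lam : nat), (2 <= lam)%N ->
     exists A : EBBA R n 1 lam, valid A /\
       forall z : bitv n,
         gens_gt A (OM z) (ceil_div n (trunc_log 2 lam)) = 0).
Proof.
split.
  move=> R n.
  exists (AD R n 1 (xs0 n) (Gk n (trunc_log 2 2) 1)); split; first exact: AD_valid.
  move=> z.
  have Hal : forall T, (n <= T)%N ->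
      alive R n 1 (xs0 n) (Gk n (trunc_log 2 2) 1) (OM z) T = false.
    move=> T HT; apply: (@alive_false R n 1 z) => //.
    by have -> : trunc_log 2 2 = 1%N by []; rewrite muln1.
  split; last by rewrite gens_gtE Hal.
  rewrite /exp_evals (nneseries_split 0 (2 * n + 1)).
  - rewrite add0n eseries0 ?adde0; last first.
      move=> m Hm _.
      have [b [-> Hb]] := evals_gt_le R n 1 (xs0 n) (Gk n (trunc_log 2 2) 1) (OM z) m.
      case: b Hb => // /(_ isT).
      rewrite Hal; last by lia.
      by have -> : (m == 0)%N = false by lia.
    rewrite sumEFin lee_fin.
    apply: (@le_trans _ _ (\sum_(0 <= m < 2 * n + 1) (1 : R))).
      apply: ler_sum => m _.
      have [b [-> _]] := evals_gt_le R n 1 (xs0 n) (Gk n (trunc_log 2 2) 1) (OM z) m.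
      by case: b.
    by rewrite sumr_const_nat subn0.
  - move=> m _.
    have [b [-> _]] := evals_gt_le R n 1 (xs0 n) (Gk n (trunc_log 2 2) 1) (OM z) m.
    by rewrite lee_fin ler0n.
move=> R n [|[|l]] // Hl.
exists (AD R n l.+1 (xs0 n) (Gk n (trunc_log 2 l.+2) l.+1)); split; first exact: AD_valid.
move=> z; rewrite gens_gtE alive_false //.
apply: ceil_div_ge; by rewrite trunc_log_gt0.
Qed.
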